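(* Let $p>1$, $s\ge r\ge2$, let $Q$ be an $s$-vertex $r$-graph and let $H$ be an $n$-vertex $r$-graph ($n\ge s$) with $\lambda=\lambda^{(p)}(Q,H)$ and minimum $Q$-degree $\delta=\delta_Q(H)$. Let $\mathbf x$ be a principal $Q$-eigenvector of $H$. Then $$\Big(\frac{\lambda\,(\mathbf x_{\min})^{p-1}}{(s-1)!}\Big)^{p}\le\frac{s!\binom{n}{s-1}\delta^{p-1}}{n^{s-1}}-\Big(s!\tbinom{n}{s-1}\delta^{p-1}-\delta^{p}\Big)(\mathbf x_{\min})^{p(s-1)}.$$
   Context: An $r$-graph ($r\ge 2$) is a finite hypergraph all of whose edges have exactly $r$ vertices. For $I\subseteq V(H)$, $H[I]$ denotes the induced subhypergraph on $I$. For an $s$-vertex $r$-graph $Q$ and an $r$-graph $H$, $\mathcal N(Q,H)$ is the number of (not necessarily induced) subgraphs of $H$ isomorphic to $Q$. For an $n$-vertex $r$-graph $H$ with vertex set $[n]$ and $\mathbf x\in\mathbb R^n$, $P_{Q,H}(\mathbf x)=s!\sum_{\{i_1,\dots,i_s\}\in\binom{[n]}{s}}\mathcal N(Q,H[\{i_1,\dots,i_s\}])\,x_{i_1}\cdots x_{i_s}$, and for $p\ge1$, $\lambda^{(p)}(Q,H)=\max_{\|\mathbf x\|_p=1}P_{Q,H}(\mathbf x)$. A principal $Q$-eigenvector of $H$ is a nonnegative vector $\mathbf x$ with $\|\mathbf x\|_p=1$ and $P_{Q,H}(\mathbf x)=\lambda^{(p)}(Q,H)$; $\mathbf x_{\min}$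 denotes its smallest entry. The $Q$-degree of a vertex $v$ is $d_{Q,H}(v)=\sum\mathcal N(Q,H[I])$, the sum over all $s$-subsets $I\subseteq V(H)$ containing $v$; $\delta_Q(H)$ is the minimum $Q$-degree over all vertices. *)

(* Defs.v *)
From HB Require Import structures.
From mathcomp Require Import all_boot all_order all_algebra.
From mathcomp Require Import all_classical all_reals all_analysis.
Set Implicit Arguments. Unset Strict Implicit. Unset Printing Implicit Defensive.
Import Order.TTheory GRing.Theory Num.Theory.
Local Open Scope ring_scope.

Definition is_rgraph (r n : nat) (E : {set {set 'I_n}}) : bool :=
  [forall e in E, #|e| == r].

(* N(Q, H[I]) : number of (not necessarily induced) subgraphs (V', E') of the
   induced subgraph H[I] that are isomorphic to Q (Q on vertex set 'I_s with
   edge set EQ). *)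
Definition NQ (s n : nat) (EQ : {set {set 'I_s}}) (EH : {set {set 'I_n}})
  (I : {set 'I_n}) : nat :=
  #|[set VE : {set 'I_n} * {set {set 'I_n}} |
     [&& VE.1 \subset I, VE.2 \subset EH,
         [forall e in VE.2, e \subset VE.1] &
         [exists f : {ffun 'I_s -> 'I_n},
            [&& injectiveb f, f @: setT == VE.1 &
                [set f @: (e : {set 'I_s}) | e in EQ] == VE.2]]]]|.

Definition PQH {R : realType} (s n : nat) (EQ : {set {set 'I_s}})
  (EH : {set {set 'I_n}}) (x : 'I_n -> R) : R :=
  (s`!)%:R * \sum_(I : {set 'I_n} | #|I| == s)
                (NQ EQ EH I)%:R * \prod_(i in I) x i.

Definition pnorm {R : realType} (n : nat) (p : R) (x : 'I_n -> R) : R :=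
  powR (\sum_i powR `|x i| p) p^-1.

(* lambda^{(p)}(Q,H) = max_{||x||_p = 1} P_{Q,H}(x) (taken as the supremum,
   which is attained by compactness). *)
Definition lambdaQH {R : realType} (s n : nat) (p : R) (EQ : {set {set 'I_s}})
  (EH : {set {set 'I_n}}) : R :=
  sup [set PQH EQ EH y | y in [set y : 'I_n -> R | pnorm p y = 1]].

Definition principal_Qeigvec {R : realType} (s n : nat) (p : R)
  (EQ : {set {set 'I_s}}) (EH : {set {set 'I_n}}) (x : 'I_n -> R) : Prop :=
  (forall i, 0 <= x i) /\ pnorm p x = 1 /\ PQH EQ EH x = lambdaQH p EQ EH.

Definition Qdeg (s n : nat) (EQ : {set {set 'I_s}}) (EH : {set {set 'I_n}})
  (v : 'I_n) : nat :=
  \sum_(I : {set 'I_n} | (#|I| == s) && (v \in I)) NQ EQ EH I.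

(* minimum Q-degree (the max is only used as the neutral seed; n > 0) *)
Definition minQdeg (s n : nat) (EQ : {set {set 'I_s}}) (EH : {set {set 'I_n}})
  : nat :=
  \big[minn/ \max_(v < n) Qdeg EQ EH v]_(v < n) Qdeg EQ EH v.

(* smallest entry of x (the max entry is only the neutral seed; n > 0) *)
Definition xmin {R : realType} (n : nat) (x : 'I_n -> R) : R :=
  \big[Num.min/ \big[Num.max/0]_(i < n) x i]_(i < n) x i.

(* Main.v *)
Require Import Defs.
From HB Require Import structures.
From mathcomp Require Import all_boot all_order all_algebra.
From mathcomp Require Import all_classical all_reals all_analysis.
From mathcomp Require Import ring lra.
Import Order.TTheory GRing.Theory Num.Theory.
Local Open Scope ring_scope.
Section Comb.
Variable R : realType.

Lemma split_sum {T : finType} (A : {set T}) (a : T) k (F : {set T} -> R) :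
  a \in A ->
  \sum_(J : {set T} | (J \subset A) && (#|J| == k.+1) && (a \in J)) F J =
  \sum_(J : {set T} | (J \subset A :\ a) && (#|J| == k)) F (a |: J).
Proof.
move=> aA.
rewrite (reindex_onto (fun J => a |: J) (fun J => J :\ a)) /=; last first.
  by move=> J /andP[_ aJ]; rewrite finset.setD1K.
apply: eq_bigl => J.
rewrite setU11 andbT subsetD1 finset.subUset finset.sub1set aA /=.
case: (boolP (a \in J)) => aJ /=.
  rewrite andbF /=; apply/negbTE; apply/negP => /andP[_ /eqP E].
  by move: aJ; rewrite -E !inE eqxx.
rewrite finset.setU1K // eqxx andbT cardsU1 aJ add1n eqSS.
by rewrite andbT.
Qed.

Definition esym {T : finType} (z : T -> R) k (A : {set T}) : R :=
  \sum_(J : {set T} | (J \subset A) && (#|J| == k)) \prod_(i in J) z i.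

Lemma esym_split {T : finType} (z : T -> R) k (A : {set T}) a : a \in A ->
  esym z k.+1 A = esym z k.+1 (A :\ a) + z a * esym z k (A :\ a).
Proof.
move=> aA; rewrite /esym (bigID (fun J : {set T} => a \in J)) /= addrC; congr (_ + _).
  apply: eq_bigl => J; rewrite subsetD1; case: (J \subset A) => //=.
  by rewrite andbC.
rewrite split_sum // mulr_sumr; apply: eq_bigr => J /andP[JA _].
rewrite big_setU1 //=; move: JA; rewrite subsetD1 => /andP[].
done.
Qed.

Lemma esym_big {T : finType} (z : T -> R) k (A : {set T}) : (#|A| < k)%N ->
  esym z k A = 0.
Proof.
move=> Ak; rewrite /esym big1 // => J /andP[JA /eqP Jk].
by move: (subset_leq_card JA); rewrite Jk leqNgt Ak.
Qed.

Lemma esym0 {T : finType} (z : T -> R) (A : {set T}) : esym z 0 A = 1.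
Proof.
rewrite /esym (big_pred1 finset.set0) ?finset.big_set0 // => J.
rewrite cards_eq0 andbC; case: eqP => [->|] //=.
  by rewrite finset.sub0set eqxx.
by move=> /eqP/negbTE ->.
Qed.

Lemma esym_ge0 {T : finType} (z : T -> R) k (A : {set T}) :
  (forall i, 0 <= z i) -> 0 <= esym z k A.
Proof. by move=> z0; apply: sumr_ge0 => J _; apply: prodr_ge0. Qed.

Lemma bernoulli_nat (y : R) n : -1 <= y -> 1 + n%:R * y <= (1 + y) ^+ n.
Proof.
move=> y1; elim: n => [|n IH]; first by rewrite mul0r addr0 expr0.
rewrite exprS.
have h1 : 0 <= 1 + y by lra.
have := ler_wpM2l h1 IH.
have : 0 <= n%:R * y * y by rewrite -mulrA mulr_ge0 // -expr2 sqr_ge0.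
rewrite -natr1; nra.
Qed.

Lemma amgm1 (a c : R) k : 0 <= a -> 0 <= c ->
  a ^+ k * c <= ((k%:R * a + c) / k.+1%:R) ^+ k.+1.
Proof.
move=> a0 c0.
have [->|apos] := eqVneq a 0.
  case: k => [|k]; first by rewrite !(expr0, mul1r, mulr0, mul0r, add0r, divr1, expr1).
  by rewrite expr0n /= mul0r; apply: exprn_ge0; rewrite mulr0 add0r divr_ge0.
have ap : 0 < a by rewrite lt0r apos.
have kp : (0 : R) < k.+1%:R by rewrite ltr0n.
have -> : (k%:R * a + c) / k.+1%:R = a * (1 + (c - a) / (k.+1%:R * a)).
  by field; rewrite apos /= ?pnatr_eq0.
rewrite exprMn.
have hy : -1 <= (c - a) / (k.+1%:R * a).
  rewrite ler_pdivlMr ?mulr_gt0 //.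
  have : 1 <= (k.+1%:R : R) by rewrite ler1n.
  nra.
have := @bernoulli_nat _ k.+1 hy.
have -> : 1 + k.+1%:R * ((c - a) / (k.+1%:R * a)) = c / a.
  by field; rewrite apos /= ?pnatr_eq0.
move=> H.
have -> : a ^+ k * c = a ^+ k.+1 * (c / a) by rewrite exprS; field.
by apply: ler_wpM2l => //; exact: exprn_ge0.
Qed.


Lemma maclaurin {T : finType} (z : T -> R) : (forall i, 0 <= z i) ->
  forall N (A : {set T}), #|A| = N -> forall k,
  esym z k A * N%:R ^+ k <= 'C(N, k)%:R * (\sum_(i in A) z i) ^+ k.
Proof.
move=> z0; elim=> [|N IH] A cA [|k].
- by rewrite esym0 !expr0 bin0 mulr1.
- rewrite esym_big ?cA // mul0r; apply: mulr_ge0 => //.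
  by apply: exprn_ge0; apply: sumr_ge0.
- by rewrite esym0 !expr0 bin0 mulr1.
have Sge0 : forall B : {set T}, 0 <= \sum_(i in B) z i.
  by move=> B; apply: sumr_ge0.
have [kN|Nk] := ltnP N k.
  rewrite esym_big ?cA ?ltnS // mul0r; apply: mulr_ge0 => //.
  exact: exprn_ge0.
have [a aA] : exists a, a \in A by apply/card_gt0P; rewrite cA.
have cB : #|A :\ a| = N by move: cA; rewrite (cardsD1 a) aA add1n => -[].
rewrite (esym_split _ _ _ _ aA) (big_setD1 a aA) /=.
set B := A :\ a; set S := \sum_(i in B) z i; set b := z a.
have IH1 := IH B cB k.+1; have IH0 := IH B cB k.
have e1ge0 := esym_ge0 z k.+1 B z0; have e0ge0 := esym_ge0 z k B z0.
have bge0 : 0 <= b := z0 a.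
have Sg0 : 0 <= S := Sge0 B.
have [N0|Npos] := eqVneq N 0.
  move: Nk; rewrite N0 leqn0 => /eqP k0; subst k.
  rewrite esym_big ?cB ?N0 // esym0 add0r mulr1 expr1 binn mul1r expr1 mulr1.
  by rewrite lerDl.
have Nr : (0 : R) < N%:R by rewrite ltr0n lt0n.
have N1r : (0 : R) < N.+1%:R by rewrite ltr0n.
set a' := S / N%:R.
have a'ge0 : 0 <= a' by rewrite divr_ge0 // ltW.
have E1 : esym z k.+1 B <= 'C(N, k.+1)%:R * a' ^+ k.+1.
  rewrite /a' expr_div_n mulrA ler_pdivlMr ?exprn_gt0 //.
have E0 : esym z k B <= 'C(N, k)%:R * a' ^+ k.
  rewrite /a' expr_div_n mulrA ler_pdivlMr ?exprn_gt0 //.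
set C1 : R := 'C(N.+1, k.+1)%:R.
have B0 : 'C(N, k)%:R = k.+1%:R * C1 / N.+1%:R.
  rewrite /C1 -natrM -mul_bin_diag natrM /=; field.
  by rewrite gt_eqF.
have B1 : 'C(N, k.+1)%:R = (N%:R - k%:R) * C1 / N.+1%:R.
  rewrite /C1 -natrB // -natrM -[(N - k)%N]/(N.+1 - k.+1)%N -mul_bin_down /=.
  by rewrite natrM; field; rewrite gt_eqF.
set c := ((N%:R - k%:R) * a' + k.+1%:R * b) / N.+1%:R.
have cge0 : 0 <= c.
  apply: divr_ge0; last exact: ltW.
  apply: addr_ge0; last exact: mulr_ge0.
  by apply: mulr_ge0 => //; rewrite subr_ge0 ler_nat.
have AM := amgm1 a' c k a'ge0 cge0.
have Ec : (k%:R * a' + c) / k.+1%:R = (b + S) / N.+1%:R.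
  rewrite /c /a'; field.
  by rewrite !gt_eqF // ltr0n.
rewrite Ec in AM.
apply: (@le_trans _ _ (('C(N, k.+1)%:R * a' ^+ k.+1 + b * ('C(N, k)%:R * a' ^+ k))
   * N.+1%:R ^+ k.+1)).
  apply: ler_wpM2r; first exact: exprn_ge0 (ltW N1r).
  by apply: lerD => //; apply: ler_wpM2l.
have -> : ('C(N, k.+1)%:R * a' ^+ k.+1 + b * ('C(N, k)%:R * a' ^+ k))
   * N.+1%:R ^+ k.+1 = C1 * N.+1%:R ^+ k.+1 * (a' ^+ k * c).
  rewrite B0 B1 /c !exprS; field.
  by rewrite gt_eqF.
have -> : C1 * (b + S) ^+ k.+1 = C1 * N.+1%:R ^+ k.+1 * ((b + S) / N.+1%:R) ^+ k.+1.
  rewrite expr_div_n; field.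
  by rewrite expf_neq0 // gt_eqF.
apply: ler_wpM2l => //.
by apply: mulr_ge0; [rewrite /C1 ler0n | apply: exprn_ge0; exact: ltW].
Qed.

End Comb.
Section Deriv.
Variable R : realType.
Lemma psi_derive (L K B q p t : R) : 0 < t -> 0 <= B ->
  is_derive t 1 (fun u => L * powR (B + powR u p) q - u * K)
   (L * (q * powR (B + powR t p) (q - 1) * (p * powR t (p - 1))) - K).
Proof.
move=> t0 B0.
have hG : is_derive t 1 (fun u => B + powR u p) (p * powR t (p - 1)).
  have := is_deriveD (is_derive_cst B t 1) (is_derive1_powR p t0).
  by rewrite add0r.
have hF : is_derive (B + powR t p) 1 (fun w => powR w q) (q * powR (B + powR t p) (q - 1)).
  apply: is_derive1_powR; apply: ltr_wpDl => //; exact: powR_gt0.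
have hC := @is_derive1_comp _ (fun w => powR w q) (fun u => B + powR u p) t _ _ hF hG.
have hL := is_deriveZ L hC.
have hK : is_derive t 1 (fun u : R => u * K) K.
  have := is_deriveM (is_derive_id t 1) (is_derive_cst K t 1).
  by rewrite scaler0 add0r /GRing.scale /= mulr1.
exact: (is_deriveB hL hK).
Qed.

End Deriv.

Section Main.
Variable R : realType.
Variable p : R.
Hypothesis p1 : 1 < p.
Variables s n : nat.
Variables (EQ : {set {set 'I_s}}) (EH : {set {set 'I_n}}).

Let p0 : 0 < p. Proof. by apply: lt_trans p1. Qed.

Lemma sum_pnorm1 (y : 'I_n -> R) : pnorm p y = 1 -> \sum_i powR `|y i| p = 1.
Proof.
rewrite /pnorm => /eqP; rewrite powR_eq1 => /or3P[/eqP //| |].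
  by rewrite ltNge sumr_ge0 // => i _; apply: powR_ge0.
by rewrite invr_eq0 gt_eqF.
Qed.

Lemma abs_le1 (y : 'I_n -> R) : pnorm p y = 1 -> forall i, `|y i| <= 1.
Proof.
move=> /sum_pnorm1 S1 i; rewrite leNgt; apply/negP => yi1.
have : powR 1 p < powR `|y i| p.
  by apply: gt0_ltr_powR => //; rewrite nnegrE.
rewrite powR1 -S1 (bigD1 i) //= ltNge lerDl.
by move/negP; apply; apply: sumr_ge0 => j _; apply: powR_ge0.
Qed.

Lemma P_bound (y : 'I_n -> R) : pnorm p y = 1 ->
  PQH EQ EH y <= s`!%:R * \sum_(I : {set 'I_n} | #|I| == s) (NQ EQ EH I)%:R.
Proof.
move=> /abs_le1 y1; rewrite /PQH ler_wpM2l // ler_sum // => I _.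
rewrite -{2}[(NQ EQ EH I)%:R]mulr1 ler_wpM2l //.
apply: le_trans (ler_norm _) _; rewrite normr_prod.
by apply: prodr_ile1 => i _; rewrite normr_ge0 y1.
Qed.

Lemma P_le_lambda (y : 'I_n -> R) : pnorm p y = 1 ->
  PQH EQ EH y <= lambdaQH p EQ EH.
Proof.
move=> y1; rewrite /lambdaQH; apply: ub_le_sup; last by exists y.
exists (s`!%:R * \sum_(I : {set 'I_n} | #|I| == s) (NQ EQ EH I)%:R).
by move=> _ [z /= z1 <-]; apply: P_bound.
Qed.


Lemma P_scale (c : R) (y : 'I_n -> R) :
  PQH EQ EH (fun i => c * y i) = c ^+ s * PQH EQ EH y.
Proof.
rewrite /PQH mulrCA; congr (_ * _); rewrite mulr_sumr; apply: eq_bigr => I /eqP cI.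
by rewrite big_split /= prodr_const cI mulrCA.
Qed.

Definition principal x := principal_Qeigvec p EQ EH x.

Lemma P_max (x y : 'I_n -> R) : principal x ->
  0 < \sum_i powR `|y i| p ->
  PQH EQ EH y <= lambdaQH p EQ EH * powR (\sum_i powR `|y i| p) (s%:R / p).
Proof.
move=> [x0 [xn xP]] Sp; set S := \sum_i _ in Sp *.
set rho := powR S p^-1.
have rp : 0 < rho by apply: powR_gt0.
have rinv : rho^-1 = powR S (- p^-1) by rewrite powRN.
have y1 : pnorm p (fun i => rho^-1 * y i) = 1.
  rewrite /pnorm.
  have -> : \sum_i powR `|rho^-1 * y i| p = 1.
    have -> : \sum_i powR `|rho^-1 * y i| p = powR rho^-1 p * S.
      rewrite mulr_sumr; apply: eq_bigr => i _.
      by rewrite normrM gtr0_norm ?invr_gt0 // powRM // invr_ge0 ltW.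
    by rewrite rinv -powRrM mulNr mulVf ?gt_eqF // powR_inv1 ?mulVf ?gt_eqF // ltW.
  by rewrite powR1.
have := P_le_lambda _ y1; rewrite P_scale exprVn mulrC -ler_pdivrMr ?exprn_gt0 //.
  have -> : rho ^+ s = S `^ (s%:R / p) by rewrite /rho -powR_mulrn ?powR_ge0 // -powRrM mulrC.
  done.
by apply: powR_gt0.
Qed.


Definition P0 v (y : 'I_n -> R) :=
  \sum_(I : {set 'I_n} | (#|I| == s) && (v \notin I)) (NQ EQ EH I)%:R * \prod_(i in I) y i.
Definition Dv v (y : 'I_n -> R) :=
  \sum_(I : {set 'I_n} | (#|I| == s) && (v \in I)) (NQ EQ EH I)%:R * \prod_(i in I :\ v) y i.

Lemma P_split v y : PQH EQ EH y = s`!%:R * (P0 v y + y v * Dv v y).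
Proof.
rewrite /PQH (bigID (fun I : {set 'I_n} => v \in I)) /= addrC; congr (_ * (_ + _)).
rewrite mulr_sumr; apply: eq_bigr => I /andP[_ vI].
by rewrite (big_setD1 v vI) /= mulrCA.
Qed.

Definition upd (y : 'I_n -> R) v (u : R) := fun i => if i == v then u else y i.

Lemma P0_upd v y u : P0 v (upd y v u) = P0 v y.
Proof.
apply: eq_bigr => I /andP[_ vI]; congr (_ * _); apply: eq_bigr => i iI.
by rewrite /upd; case: eqP => // E; move: iI vI; rewrite E => ->.
Qed.

Lemma Dv_upd v y u : Dv v (upd y v u) = Dv v y.
Proof.
apply: eq_bigr => I _; congr (_ * _); apply: eq_bigr => i.
by rewrite /upd !inE; case: eqP.
Qed.

Lemma sum_upd v y u : \sum_i powR `|upd y v u i| p =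
  \sum_i powR `|y i| p - powR `|y v| p + powR `|u| p.
Proof.
rewrite (bigD1 v) //= [in RHS](bigD1 v) //= /upd eqxx.
rewrite [_ + _ - _]addrC addKr addrC; congr (_ + _).
by apply: eq_bigr => i /negbTE ->.
Qed.

Lemma eigen (x : 'I_n -> R) v : principal x -> 0 < x v ->
  lambdaQH p EQ EH * powR (x v) (p - 1) * s%:R = s`!%:R * Dv v x.
Proof.
move=> px cpos; have [x0 [xn xP]] := px.
set L := lambdaQH p EQ EH; set c := x v; set K := s`!%:R * Dv v x.
set q := s%:R / p.
have S1 := sum_pnorm1 _ xn.
set B := 1 - powR c p.
have B0 : 0 <= B.
  rewrite subr_ge0 -S1 (bigD1 v) //= ger0_norm ?x0 // lerDl.
  by apply: sumr_ge0 => i _; apply: powR_ge0.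
set psi := fun u => L * powR (B + powR u p) q - u * K.
have hmin : is_derive c 1 psi 0.
  apply: (@derive1_at_min _ _ 0 (2 * c)).
  - by rewrite mulr_ge0 // ltW.
  - move=> t; rewrite in_itv /= => /andP[t0 _].
    by case: (@psi_derive _ L K B q p t t0 B0).
  - rewrite in_itv /= cpos /=.
    move: cpos; rewrite -/c; lra.
  move=> t; rewrite in_itv /= => /andP[t0 _].
  have Sp : 0 < \sum_i powR `|upd x v t i| p.
    rewrite sum_upd S1 ger0_norm ?x0 // -/c -/B (ger0_norm (ltW t0)).
    by apply: ltr_wpDl => //; apply: powR_gt0.
  have := P_max x (upd x v t) px Sp.
  rewrite sum_upd S1 ger0_norm ?x0 // -/c -/B (ger0_norm (ltW t0)).
  rewrite (P_split v) P0_upd Dv_upd /upd eqxx -/L => H.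
  have PL : L = s`!%:R * P0 v x + c * K.
    by rewrite /L -xP (P_split v x) /K mulrDr mulrCA.
  rewrite /psi /=.
  have -> : B + powR c p = 1 by rewrite /B subrK.
  rewrite powR1 mulr1.
  move: H; rewrite mulrDr -/c mulrCA -/K; lra.
have hd := @psi_derive _ L K B q p c cpos B0.
have := derive_val (is_derive := hmin); rewrite (derive_val (is_derive := hd)).
have -> : B + powR c p = 1 by rewrite /B subrK.
rewrite powR1 mulr1 /q => /eqP; rewrite subr_eq0 => /eqP <-.
by field; rewrite gt_eqF.
Qed.

End Main.
Lemma NQ_le (s n : nat) (EQ : {set {set 'I_s}}) (EH : {set {set 'I_n}})
  (I : {set 'I_n}) : #|I| = s -> (NQ EQ EH I <= s`!)%N.
Proof.
move=> cI.
pose F := [set f : {ffun 'I_s -> 'I_n} in ffun_on (mem I) | injectiveb f].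
pose g := fun f : {ffun 'I_s -> 'I_n} =>
  (f @: setT, [set f @: (e : {set 'I_s}) | e in EQ]).
have cF : #|F| = s`! by rewrite card_inj_ffuns_on card_ord cI ffactnn.
rewrite /NQ -cF; apply: leq_trans (leq_imset_card g F).
apply: subset_leq_card; apply/fintype.subsetP => -[V E]; rewrite inE /= => /and4P[VI _ _].
case/existsP => f /and3P[fi /eqP fV /eqP fE].
apply/imsetP; exists f; last by rewrite /g fV fE.
rewrite inE fi andbT; apply/ffun_onP => i.
apply: (fintype.subsetP VI); rewrite -fV; apply/imsetP; exists i => //.
by rewrite in_setE.
Qed.

Section Jensen.
Variable R : realType.

Lemma tangent_powR (p u : R) : 1 < p -> 0 <= u -> 1 + p * (u - 1) <= powR u p.
Proof.
move=> p1 u0.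
have p0 : 0 < p by apply: lt_trans p1.
have q0 : 0 < p / (p - 1) by rewrite divr_gt0 // subr_gt0.
have pq : p^-1 + (p / (p - 1))^-1 = 1.
  by rewrite invf_div; field; rewrite !gt_eqF // subr_gt0.
have := conjugate_powR u0 ler01 p0 q0 pq.
rewrite powR1 mulr1 => H.
have : p * u <= powR u p + p * (1 / (p / (p - 1))).
  have := ler_wpM2l (ltW p0) H.
  by rewrite mulrDr [p * (_ / p)]mulrC mulfVK ?gt_eqF.
have -> : p * (1 / (p / (p - 1))) = p - 1 by field; rewrite !gt_eqF // subr_gt0.
lra.
Qed.

Lemma jensen_powR {I : finType} (P : pred I) (w y : I -> R) (p : R) : 1 < p ->
  (forall i, 0 <= w i) -> (forall i, 0 <= y i) ->
  powR (\sum_(i | P i) w i * y i) p <=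
  powR (\sum_(i | P i) w i) (p - 1) * \sum_(i | P i) w i * powR (y i) p.
Proof.
move=> p1 w0 y0.
have p0 : 0 < p by apply: lt_trans p1.
set W := \sum_(i | P i) w i; set T := \sum_(i | P i) w i * y i.
have T0 : 0 <= T by apply: sumr_ge0 => i _; apply: mulr_ge0.
have W0 : 0 <= W by apply: sumr_ge0.
have R0 : 0 <= powR W (p - 1) * \sum_(i | P i) w i * powR (y i) p.
  by apply: mulr_ge0; [apply: powR_ge0 | apply: sumr_ge0 => i _; apply: mulr_ge0 => //; apply: powR_ge0].
have [Tz|Tpos] := eqVneq T 0; first by rewrite Tz powR0 ?gt_eqF.
have Tp : 0 < T by rewrite lt0r Tpos.
have [Wz|Wpos] := eqVneq W 0.
  have : T <= 0.
    rewrite /T; apply: le_trans (_ : \sum_(i | P i) w i * 0 <= 0).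
      apply: ler_sum => i Pi; rewrite mulr0.
      have : w i = 0.
        apply/eqP; rewrite eq_le w0 andbT -Wz /W (bigD1 i) //= lerDl.
        by apply: sumr_ge0.
      by move=> ->; rewrite mul0r.
    by rewrite big1 // => i _; rewrite mulr0.
  by rewrite leNgt Tp.
have Wp : 0 < W by rewrite lt0r Wpos.
set M := T / W.
have Mp : 0 < M by rewrite divr_gt0.
have key : powR M p * W <= \sum_(i | P i) w i * powR (y i) p.
  have -> : powR M p * W = \sum_(i | P i) w i * (powR M p * (1 + p * (y i / M - 1))).
    rewrite (eq_bigr (fun i => powR M p * (w i + p * (w i * y i / M - w i)))); last first.
      by move=> i _; rewrite mulrCA; congr (_ * _); rewrite mulrDr mulrCA mulrBr mulr1 mulrA.
    rewrite -mulr_sumr big_split /= -mulr_sumr sumrB -mulr_suml -/W -/T.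
    congr (_ * _); rewrite /M; field.
    by rewrite Wpos Tpos.
  apply: ler_sum => i _; apply: ler_wpM2l => //.
  have -> : powR (y i) p = powR M p * powR (y i / M) p.
    rewrite -powRM; [|exact: ltW|exact: divr_ge0 (y0 i) (ltW Mp)].
    by rewrite [M * _]mulrC divfK // gt_eqF.
  apply: ler_wpM2l; first exact: powR_ge0.
  by apply: tangent_powR => //; apply: divr_ge0 => //; apply: ltW.
apply: le_trans (ler_wpM2l (powR_ge0 _ _) key).
rewrite mulrCA -{2}(powRr1 W0) -powRD; last by rewrite Wpos implybT.
rewrite subrK -powRM; [|exact: ltW Mp|exact: W0].
by rewrite /M divfK.
Qed.

End Jensen.

Definition fT (n : nat) : {set 'I_n} := finset.setTfor 'I_n.

Lemma powR_prod (R : realType) {I : finType} (P : pred I) (F : I -> R) r :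
  (forall i, 0 <= F i) ->
  powR (\prod_(i | P i) F i) r = \prod_(i | P i) powR (F i) r.
Proof.
move=> F0.
suff [] : 0 <= \prod_(i | P i) F i /\
   powR (\prod_(i | P i) F i) r = \prod_(i | P i) powR (F i) r by [].
apply: (big_rec2 (fun a b => 0 <= a /\ powR a r = b)); first by rewrite powR1.
move=> i a b _ [a0 <-]; split; first exact: mulr_ge0.
by rewrite powRM.
Qed.

Lemma sum_shift (R : realType) n s (v : 'I_n) (f : {set 'I_n} -> R) : (0 < s)%N ->
  \sum_(I : {set 'I_n} | (#|I| == s) && (v \in I)) f (I :\ v) =
  \sum_(J : {set 'I_n} | (J \subset fT n :\ v) && (#|J| == s.-1)) f J.
Proof.
move=> s0.
rewrite (eq_bigl (fun I : {set 'I_n} => (I \subset fT n) && (#|I| == s.-1.+1) && (v \in I))); last first.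
  by move=> I; rewrite finset.subsetT prednK.
rewrite split_sum ?finset.in_setT //; apply: eq_bigr => J /andP[JB _].
by rewrite finset.setU1K //; move: JB; rewrite subsetD1 => /andP[].
Qed.

Lemma card_fTD1 n (v : 'I_n) : #|fT n :\ v| = n.-1.
Proof.
have := cardsD1 v (fT n); rewrite finset.in_setT /fT finset.cardsT card_ord.
by move=> E; rewrite [in RHS]E.
Qed.

Theorem lemma3p6 (R : realType) (p : R) (r s n : nat)
  (EQ : {set {set 'I_s}}) (EH : {set {set 'I_n}}) (x : 'I_n -> R) :
  1 < p -> (2 <= r)%N -> (r <= s)%N -> (s <= n)%N ->
  is_rgraph r EQ -> is_rgraph r EH ->
  principal_Qeigvec p EQ EH x ->
  let lambda := lambdaQH p EQ EH in
  let delta : R := (minQdeg EQ EH)%:R in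
  let c : R := ((s`!) * 'C(n, s.-1))%:R in
  powR (lambda * powR (xmin x) (p - 1) / ((s.-1)`!)%:R) p
  <= c * powR delta (p - 1) / (n%:R ^+ s.-1)
     - (c * powR delta (p - 1) - powR delta p) * powR (xmin x) (p * (s.-1)%:R).
Proof.
move=> p1 r2 rs sn gQ gH px.
cbv zeta.
set lambda := lambdaQH p EQ EH.
set delta : R := (minQdeg EQ EH)%:R.
set c : R := ((s`!) * 'C(n, s.-1))%:R.
have p0 : 0 < p by apply: lt_trans p1.
have s2 : (2 <= s)%N by apply: leq_trans r2 rs.
have s0 : (0 < s)%N by apply: leq_trans s2.
have n0 : (0 < n)%N by apply: leq_trans sn.
have [x0 [xn xP]] := px.
have Nr : (0 : R) < n%:R ^+ s.-1 by rewrite exprn_gt0 // ltr0n.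
have dp0 : 0 <= powR delta (p - 1) by apply: powR_ge0.
have c0 : 0 <= c by rewrite ler0n.
set m0 := xmin x.
have m0le : forall i, m0 <= x i.
  by move=> i; rewrite /m0 /xmin (bigD1 i) //= ge_min lexx.
have m0ge0 : 0 <= m0.
  rewrite /m0 /xmin; apply: (big_ind (fun a => 0 <= a)) => //.
  - apply: (big_ind (fun a => 0 <= a)) => //.
    by move=> a b a0 b0; rewrite le_max a0.
  - by move=> a b a0 b0; rewrite le_min a0 b0.
have lam0 : 0 <= lambda.
  rewrite /lambda -xP /PQH; apply: mulr_ge0 => //; apply: sumr_ge0 => I _.
  by apply: mulr_ge0 => //; apply: prodr_ge0.
have [m0z|m0ne] := eqVneq m0 0.
  rewrite m0z powR0; last by rewrite subr_eq0 gt_eqF.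
  rewrite mulr0 mul0r (powR0 (x := p)) ?gt_eqF // (powR0 (x := p * _)); last first.
    apply: mulf_neq0; first by rewrite gt_eqF.
    by rewrite pnatr_eq0 -lt0n -subn1 subn_gt0.
  rewrite mulr0 subr0; apply: divr_ge0; [exact: mulr_ge0 | exact: ltW].
have m0p : 0 < m0 by rewrite lt0r m0ne.
have [v0 dv0] : exists v0, minQdeg EQ EH = Qdeg EQ EH v0.
  rewrite /minQdeg; apply: (big_ind (fun m => exists v0, m = Qdeg EQ EH v0)).
  - have [i0 ->] := @bigop.eq_bigmax _ (fun v => Qdeg EQ EH v) (ltac:(by rewrite card_ord)).
    by exists i0.
  - by move=> a b [va ->] [vb ->]; rewrite /minn; case: ltnP => _; eexists.
  - by move=> i _; exists i.
set xv := x v0.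
have xvpos : 0 < xv by apply: lt_le_trans m0p (m0le v0).
set D := Dv R s n EQ EH v0 x.
have eig := @eigen R p p1 s n EQ EH x v0 px xvpos.
have fE : (s`!)%:R = s%:R * (s.-1)`!%:R :> R.
  by rewrite -natrM; move: s0; case: (s) => // k _; rewrite factS.
have DE : lambda * powR xv (p - 1) / (s.-1)`!%:R = D.
  apply: (@mulfI _ (s`!)%:R); first by rewrite pnatr_eq0 -lt0n fact_gt0.
  rewrite -eig -/lambda -/xv -/D fE; field.
  by rewrite pnatr_eq0 -lt0n fact_gt0.
have D0 : 0 <= D.
  by apply: sumr_ge0 => I _; apply: mulr_ge0 => //; apply: prodr_ge0.
have step1 : powR (lambda * powR m0 (p - 1) / (s.-1)`!%:R) p <= powR D p.
  apply: (ge0_ler_powR (ltW p0)); rewrite ?nnegrE //.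
    by apply: divr_ge0 => //; apply: mulr_ge0 => //; apply: powR_ge0.
  rewrite -DE; apply: ler_wpM2r; first by rewrite invr_ge0.
  have h1 : 0 <= p - 1 by rewrite subr_ge0 ltW.
  apply: ler_wpM2l => //; apply: (ge0_ler_powR h1); rewrite ?nnegrE //.
    exact: ltW xvpos.
  exact: m0le.
set z := fun i => powR (x i) p.
have z0 : forall i, 0 <= z i by move=> i; apply: powR_ge0.
set mp := powR m0 p.
have mp0 : 0 <= mp by apply: powR_ge0.
have mpz : forall i, mp <= z i.
  move=> i; apply: (ge0_ler_powR (ltW p0)); rewrite ?nnegrE //; exact: m0le.
have s21 : (s.-2).+1 = s.-1 by move: s2; case: (s) => [|[|k]].
set m := mp ^+ s.-1.
set B := fT n :\ v0.
have cB : #|B| = n.-1 by apply: card_fTD1.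
have dE : delta = \sum_(I : {set 'I_n} | (#|I| == s) && (v0 \in I)) (NQ EQ EH I)%:R.
  by rewrite /delta dv0 /Qdeg natr_sum.
have step2 : powR D p <= powR delta (p - 1) *
    \sum_(I : {set 'I_n} | (#|I| == s) && (v0 \in I))
        (NQ EQ EH I)%:R * \prod_(i in I :\ v0) z i.
  have J := @jensen_powR R {set 'I_n} (fun I => (#|I| == s) && (v0 \in I))
    (fun I => (NQ EQ EH I)%:R) (fun I => \prod_(i in I :\ v0) x i) p p1
    (fun I => ltac:(by rewrite ler0n)) (fun I => ltac:(by apply: prodr_ge0 => i _; apply: x0)).
  apply: le_trans J _; rewrite -dE; apply: ler_wpM2l => //.
  apply: ler_sum => I _; rewrite powR_prod //.
set E := esym R z (s.-1) B.
set C1 : R := 'C(n.-1, s.-1)%:R.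
have hE : \sum_(I : {set 'I_n} | (#|I| == s) && (v0 \in I)) \prod_(i in I :\ v0) z i = E.
  by rewrite /E /esym (@sum_shift R n s v0 (fun J => \prod_(i in J) z i)).
have hC : \sum_(I : {set 'I_n} | (#|I| == s) && (v0 \in I)) (1 : R) = C1.
  rewrite (@sum_shift R n s v0 (fun _ => 1)) //.
  rewrite (eq_bigl (fun J => J \in [set J : {set 'I_n} | (J \subset B) & (#|J| == s.-1)])); last first.
    by move=> J; rewrite inE.
  by rewrite sumr_const cards_draws cB.
have step3 : \sum_(I : {set 'I_n} | (#|I| == s) && (v0 \in I))
        (NQ EQ EH I)%:R * \prod_(i in I :\ v0) z i
    <= s`!%:R * E - (s`!%:R * C1 - delta) * m.
  apply: (@le_trans _ _ (\sum_(I : {set 'I_n} | (#|I| == s) && (v0 \in I))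
      (s`!%:R * \prod_(i in I :\ v0) z i + (- (s`!%:R * m) * 1 + m * (NQ EQ EH I)%:R)))).
    apply: ler_sum => I /andP[/eqP cI vI].
    have NI : (NQ EQ EH I)%:R <= s`!%:R :> R by rewrite ler_nat NQ_le.
    have pm : m <= \prod_(i in I :\ v0) z i.
      apply: (@le_trans _ _ (\prod_(i in I :\ v0) mp)).
        rewrite prodr_const /m; have := cardsD1 v0 I; rewrite vI cI => ->.
        by rewrite add1n.
      by apply: ler_prod => i _; rewrite mp0 mpz.
    have : 0 <= (s`!%:R - (NQ EQ EH I)%:R) * (\prod_(i in I :\ v0) z i - m).
      by apply: mulr_ge0; rewrite subr_ge0.
    lra.
  rewrite big_split big_split /= -!mulr_sumr hE hC -dE; lra.
set N := n%:R ^+ s.-1 : R.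
set Cn : R := 'C(n, s.-1)%:R.
set C2 : R := 'C(n.-1, s.-2)%:R.
have step4 : E <= Cn / N - C2 * m.
  have spl : esym R z (s.-1) (fT n) = E + z v0 * esym R z (s.-2) B.
    by rewrite -{1}s21 (@esym_split R _ z _ (fT n) v0 (finset.in_setT v0)) s21.
  have mac := @maclaurin R 'I_n z z0 n (fT n)
      (ltac:(by rewrite /fT finset.cardsT card_ord)) (s.-1).
  have S1 : \sum_(i in fT n) z i = 1.
    rewrite -(@sum_pnorm1 R p p1 n x xn); apply: eq_big => [i|i _].
      by rewrite finset.in_setT.
    by rewrite ger0_norm.
  rewrite S1 expr1n mulr1 in mac.
  have Z1 : esym R z (s.-1) (fT n) <= Cn / N by rewrite ler_pdivlMr.
  have low : C2 * mp ^+ s.-2 <= esym R z (s.-2) B.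
    apply: (@le_trans _ _ (\sum_(J : {set 'I_n} | (J \subset B) && (#|J| == s.-2)) mp ^+ s.-2)).
      rewrite (eq_bigl (fun J => J \in [set J : {set 'I_n} | (J \subset B) & (#|J| == s.-2)])); last first.
        by move=> J; rewrite inE.
      by rewrite sumr_const cards_draws cB mulr_natl.
    apply: ler_sum => J /andP[_ /eqP cJ].
    by rewrite -cJ -prodr_const; apply: ler_prod => i _; rewrite mp0 mpz.
  have G : C2 * m <= z v0 * esym R z (s.-2) B.
    rewrite /m -s21 exprS mulrCA; apply: ler_pM => //.
      by apply: mulr_ge0; [rewrite ler0n | apply: exprn_ge0].
  move: Z1; rewrite spl; lra.
have fac0 : (0 : R) <= s`!%:R by rewrite ler0n.
have bin : Cn = C1 + C2.
  rewrite /Cn /C1 /C2 -natrD; congr (_%:R).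
  move: n0 s2; case: (n) => // n' _; case: (s) => [|[|s']] // _.
apply: (le_trans step1); apply: (le_trans step2).
apply: (le_trans (ler_wpM2l dp0 step3)).
have -> : powR m0 (p * (s.-1)%:R) = m by rewrite powRrM powR_mulrn.
have -> : powR delta p = delta * powR delta (p - 1) by rewrite mulr_powRB1 // ler0n.
have -> : c = s`!%:R * Cn by rewrite /c natrM.
apply: (@le_trans _ _ (powR delta (p - 1) * (s`!%:R * (Cn / N - C2 * m) - (s`!%:R * C1 - delta) * m))).
  apply: ler_wpM2l => //; apply: lerB => //; exact: ler_wpM2l.
rewrite bin le_eqVlt; apply/orP; left; apply/eqP; rewrite /N; field.
by rewrite expf_neq0 // pnatr_eq0 -lt0n.
Qed.
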